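(* Consider a time window $W$ between two consecutive rebuilds of an ordered linear probing hash table. If an insertion $u$ in $W$ hashes to position $i$, then it takes time $O(o_i+s_i+d_u+1)$. If a query or deletion $u$ in $W$ hashes to position $i$, then it takes time $O(o_i+s_i+1)$.
   Context: Ordered linear probing with tombstones: slots $1,\dots,n$, each holding a key, tombstone, or free; a tombstone's hash is that of the deleted key; entries in each maximal run of non-free slots are stored in hash order. A query for $u$ scans $h(u),h(u)+1,\dots$ until finding $u$, an entry with hash greater than $h(u)$, or a free slot; a deletion performs the query and replaces $u$ by a tombstone; an insertion places $u$ at its hash-order position and shifts subsequent entries right by one until reaching a tombstone or free slot, which it uses. Time = number of slots examined/moved. The peak $p_u$ of an insertion is the hash of the tombstone it uses, or the position of the free slot it uses; its displacement is $d_u=p_u-h(u)$. The positional offset $o_i$ is $j-i$ where $j\ge i$ is the largest position such that at the end of $W$ all positions in $[i,j-1]$ contain keys/tombstones with hashes smaller than $i$. The spillover $s_i$ is the largest $k\ge0$ such that, among all keys that are present at the start of $W$ or inserted during $W$, at least $4k$ have hashes in $[i,i+k)$. *)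

(* Defs.v *)
From mathcomp Require Import all_boot.
Set Implicit Arguments. Unset Strict Implicit. Unset Printing Implicit Defensive.

Section OLP.
Variable K : eqType.

(* A slot: free, a key, or a tombstone carrying the hash of the deleted key. *)
Inductive slot := Free | Key of K | Tomb of nat.

Inductive op := Ins of K | Del of K | Qry of K.

(* A table is a map from positions to slots; only positions 1..n are real. *)
Definition table := nat -> slot.

Variables (n : nat) (h : K -> nat).

Definition get (T : table) (q : nat) : slot :=
  if (1 <= q <= n) then T q else Free.

Definition is_free (s : slot) : bool := if s is Free then true else false.
Definition is_tomb (s : slot) : bool := if s is Tomb _ then true else false.
Definition is_key (u : K) (s : slot) : bool :=
  if s is Key x then x == u else false.
(* hash of an entry (meaningless, 0, for a free slot) *)
Definition slot_hash (s : slot) : nat :=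
  match s with Free => 0 | Key x => h x | Tomb a => a end.

(* least q in [a, b) with P q, or b if there is none *)
Definition first_at (P : pred nat) (a b : nat) : nat :=
  a + find P (iota a (b - a)).

(* Position where the query for u stops: u found, an entry with hash > h u,
   or a free slot.  (Position n+1 is "free".) *)
Definition qpos (T : table) (u : K) : nat :=
  first_at (fun q => let s := get T q in
              [|| is_free s, is_key u s | h u < slot_hash s]) (h u) n.+1.

(* Hash-order position for inserting u: first free slot or entry with
   hash > h u, starting from h u (u goes after entries of equal hash). *)
Definition ipos (T : table) (u : K) : nat :=
  first_at (fun q => let s := get T q in is_free s || (h u < slot_hash s))
           (h u) n.+1.

Definition tpos (T : table) (p : nat) : nat :=
  first_at (fun q => let s := get T q in is_free s || is_tomb s) p n.+1.

Definition present (T : table) (u : K) : bool :=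
  has (fun q => is_key u (T q)) (iota 1 n).

(* One operation: new table, time (slots examined/moved), displacement d_u
   (0 for queries and deletions). *)
Definition step (T : table) (o : op) : option (table * nat * nat) :=
  match o with
  | Qry u => Some (T, qpos T u - h u + 1, 0)
  | Del u =>
      let q := qpos T u in
      if is_key u (get T q) then
        Some ((fun r => if r == q then Tomb (h u) else T r), q - h u + 1, 0)
      else None
  | Ins u =>
      if present T u then None else
      let p := ipos T u in
      let q := tpos T p in
      if q <= n then
        let peak := match get T q with Tomb a => a | _ => q end in
        Some ((fun r => if r == p then Key u
                        else if (p < r <= q) then T r.-1 else T r),
              q - h u + 1, peak - h u)
      else None
  end.

Fixpoint exec (T : table) (ops : seq op) : option (table * seq (nat * nat)) :=
  match ops with
  | [::] => Some (T, [::])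
  | o :: ops' =>
      match step T o with
      | None => None
      | Some (T1, c, d) =>
          match exec T1 ops' with
          | None => None
          | Some (Te, l) => Some (Te, (c, d) :: l)
          end
      end
  end.

(* State right after a rebuild: no tombstones, standard linear-probing
   invariant (no free slot between an entry's hash and its position), and
   entries of each run are in hash order. *)
Definition rebuilt (T : table) : Prop :=
  [/\ forall q, 1 <= q <= n -> ~~ is_tomb (T q),
      forall q x, 1 <= q <= n -> T q = Key x ->
        h x <= q /\ (forall r, h x <= r <= q -> ~~ is_free (T r))
    & forall q, 1 <= q < n -> ~~ is_free (T q) -> ~~ is_free (T q.+1) ->
        slot_hash (T q) <= slot_hash (T q.+1)].

Definition offset (T : table) (i : nat) : nat :=
  \max_(j < n.+2 | (i <= j) &&
        all (fun q => ~~ is_free (get T q) && (slot_hash (get T q) < i))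
            (index_iota i j)) (j - i).

Definition key_of (s : slot) : option K := if s is Key x then Some x else None.
Definition ins_key (o : op) : option K := if o is Ins u then Some u else None.

Definition window_hashes (T0 : table) (ops : seq op) : seq nat :=
  [seq h x | x <- pmap (fun q => key_of (T0 q)) (iota 1 n)]
  ++ [seq h u | u <- pmap ins_key ops].

Definition spill (hs : seq nat) (i : nat) : nat :=
  \max_(k < (size hs).+1 | 4 * k <= count (fun a => i <= a < i + k) hs) k.

End OLP.

(* Main.v *)
Require Import Defs.
From mathcomp Require Import all_boot zify.
Set Implicit Arguments. Unset Strict Implicit. Unset Printing Implicit Defensive.

Lemma first_at_ge (P : pred nat) a b : a <= first_at P a b.
Proof. by rewrite /first_at leq_addr. Qed.

Lemma first_at_le (P : pred nat) a b : a <= b -> first_at P a b <= b.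
Proof.
move=> ab; rewrite /first_at.
have := find_size P (iota a (b - a)); rewrite size_iota; lia.
Qed.

Lemma first_at_before (P : pred nat) a b s :
  a <= s -> s < first_at P a b -> ~~ P s.
Proof.
move=> hs; rewrite /first_at => hl.
have hi : s - a < find P (iota a (b - a)) by lia.
have := before_find 0 hi.
have hsz : s - a < b - a.
  have := find_size P (iota a (b - a)); rewrite size_iota; lia.
rewrite nth_iota //; have -> : a + (s - a) = s by lia.
by move=> ->.
Qed.

Lemma first_at_hit (P : pred nat) a b :
  first_at P a b < b -> P (first_at P a b).
Proof.
rewrite /first_at => hl.
have hi : find P (iota a (b - a)) < size (iota a (b - a)) by rewrite size_iota; lia.
have hsz := hi; rewrite size_iota in hsz.
rewrite -has_find in hi.
by have := nth_find 0 hi; rewrite nth_iota.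
Qed.

Section Inv.
Variable K : eqType.
Variables (n : nat) (h : K -> nat).
Hypothesis hh : forall x, 1 <= h x <= n.

Definition nf (T : table K) s := ~~ is_free (get n T s).
Definition hs (T : table K) s := slot_hash h (get n T s).

Definition Str (T : table K) :=
  [/\ forall r, hs T r <= r,
      forall r, nf T r -> nf T r.+1 -> hs T r <= hs T r.+1
    & forall r s, nf T r -> hs T r <= s <= r -> nf T s].

Definition Pref (T : table K) i j := forall s, i <= s < j -> nf T s /\ hs T s < i.

Definition S (P : pred nat) (T : table K) :=
  \sum_(1 <= r < n.+1) (nf T r && P (hs T r)).

Lemma nf_range (T : table K) s : nf T s -> 1 <= s <= n.
Proof. by rewrite /nf /get; case: ifP. Qed.

Lemma get_in (T : table K) s : 1 <= s <= n -> get n T s = T s.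
Proof. by rewrite /get => ->. Qed.

Lemma chain (T : table K) a b : Str T -> (forall t, a <= t <= b -> nf T t) -> a <= b ->
  hs T a <= hs T b.
Proof.
case=> _ I2 _ hn; elim: b hn => [|b IH] hn ab.
  by have -> : a = 0 by lia.
case: (ltnP a b.+1) => ab'.
  have h1 : hs T a <= hs T b.
    by apply: IH; [move=> t ht; apply: hn; lia | lia].
  apply: leq_trans h1 (I2 _ _ _); apply: hn; lia.
by have -> : a = b.+1 by lia.
Qed.

End Inv.

Section Ins.
Variable K : eqType.
Variables (n : nat) (h : K -> nat).
Hypothesis hh : forall x, 1 <= h x <= n.
Variables (T : table K) (v : K) (p q : nat).
Hypotheses (Hp : h v <= p) (Hpq : p <= q) (Hq : q <= n).
Hypothesis F1 : forall s, h v <= s < p -> nf n T s /\ hs n h T s <= h v.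
Hypothesis F3 : nf n T p -> h v < hs n h T p.
Hypothesis F4 : forall s, p <= s < q -> nf n T s.
Hypothesis F5 : ~~ nf n T q \/ is_tomb (get n T q).

Let T' : table K := fun r => if r == p then Key v
                        else if (p < r <= q) then T r.-1 else T r.

Lemma hv1 : 1 <= h v. Proof. by case/andP: (hh v). Qed.

Lemma getp : get n T' p = Key v.
Proof. have := hv1; rewrite /get /T' eqxx; case: ifP => //; lia. Qed.

Lemma getmid r : p < r -> r <= q -> get n T' r = get n T r.-1.
Proof.
move=> h1 h2; have := hv1 => h3.
rewrite /get /T'; have -> : (r == p) = false by lia.
have -> : (p < r <= q) = true by lia.
have -> : (1 <= r <= n) = true by lia.
by have -> : (1 <= r.-1 <= n) = true by lia.
Qed.

Lemma getout r : r < p \/ q < r -> get n T' r = get n T r.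
Proof.
move=> h1; rewrite /get /T'; have -> : (r == p) = false by lia.
by have -> : (p < r <= q) = false by lia.
Qed.

Lemma nfp : nf n T' p. Proof. by rewrite /nf getp. Qed.
Lemma hsp : hs n h T' p = h v. Proof. by rewrite /hs getp. Qed.
Lemma nfmid r : p < r -> r <= q -> nf n T' r.
Proof. move=> h1 h2; rewrite /nf getmid //; apply: F4; lia. Qed.
Lemma hsmid r : p < r -> r <= q -> hs n h T' r = hs n h T r.-1.
Proof. by move=> h1 h2; rewrite /hs getmid. Qed.
Lemma nfout r : r < p \/ q < r -> nf n T' r = nf n T r.
Proof. by move=> h1; rewrite /nf getout. Qed.
Lemma hsout r : r < p \/ q < r -> hs n h T' r = hs n h T r.
Proof. by move=> h1; rewrite /hs getout. Qed.

Lemma nfmono r : nf n T r -> nf n T' r.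
Proof.
move=> hr; case: (ltngtP r p) => [h1|h1|->]; last exact: nfp.
  by rewrite nfout //; left.
case: (leqP r q) => h2; first exact: nfmid.
by rewrite nfout //; right.
Qed.


Lemma ins_str : Str n h T -> Str n h T'.
Proof.
case=> I1 I2 I3; have hv := hv1.
split.
- move=> r; case: (ltngtP r p) => [h1|h1|->].
  + by rewrite hsout //; left.
  + case: (leqP r q) => h2.
      by rewrite hsmid //; have := I1 r.-1; lia.
    by rewrite hsout //; right.
  + by rewrite hsp.
- move=> r n1 n2.
  case: (ltngtP r.+1 p) => [c1|c1|c1].
  + rewrite !hsout //; try (left; lia).
    by apply: I2; rewrite -(nfout (r:=_)) //; left; lia.
  +
    case: (ltngtP r p) => [c2|c2|c2]; first lia.
    *
      case: (ltngtP r q) => [c3|c3|c3].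
      -- rewrite !hsmid //; try lia.
         have -> : r.+1.-1 = r.-1.+1 by lia.
         by apply: I2; apply: F4; lia.
      -- rewrite !hsout //; try (right; lia).
         by apply: I2; rewrite -(nfout (r:=_)) //; right; lia.
      -- subst r; rewrite hsmid // hsout; last (right; lia).
         have n3 : nf n T q.+1 by rewrite -(nfout (r:=q.+1)); [|right; lia].
         case: F5 => [nq|tq].
         ++ have : hs n h T q.+1 > q.
              rewrite ltnNge; apply/negP => hle; move/negP: nq; apply.
              apply: (I3 q.+1) => //; lia.
            have := I1 q.-1; lia.
         ++ have nq : nf n T q by move: tq; rewrite /nf; case: (get n T q).
            have e2 := I2 q nq n3.
            have e1 : hs n h T q.-1 <= hs n h T q.
              have qq : q = q.-1.+1 by lia.
              rewrite [X in _ <= hs n h T X]qq; apply: I2; first (apply: F4; lia).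
              by rewrite -qq.
            lia.
    *
      subst r; rewrite hsp.
      case: (ltnP p q) => c3.
      -- rewrite hsmid //; have hp : nf n T p by apply: F4; lia.
         exact: ltnW (F3 hp).
      -- have pq : p = q by lia.
         rewrite hsout; last (right; lia).
         have n3 : nf n T p.+1 by rewrite -(nfout (r:=p.+1)); [|right; lia].
         case: F5 => [nq|tq].
         ++ suff : p < hs n h T p.+1 by lia.
            rewrite ltnNge; apply/negP => hle; move/negP: nq; apply.
            rewrite -pq; apply: (I3 p.+1) => //; lia.
         ++ have nq : nf n T p by rewrite pq; move: tq; rewrite /nf; case: (get n T q).
            apply: leq_trans (I2 p nq n3); exact: ltnW (F3 nq).
  +
    rewrite c1 hsp hsout; last (left; lia).
    case: (leqP (h v) r) => c2.
      by have [] := F1 (s := r); [lia|].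
    by have := I1 r; lia.
- move=> r s nr hrs.
  case: (ltngtP r p) => [c1|c1|c1].
  + apply: nfmono; apply: (I3 r); first by rewrite -(nfout (r:=r)) //; left.
    by rewrite -(hsout (r:=r)) //; left.
  + case: (leqP r q) => c2.
    * case: (ltngtP s r) => [c3|c3|c3]; last (by subst s; apply: nfmid).
      -- apply: nfmono; apply: (I3 r.-1); first (apply: F4; lia).
         rewrite -hsmid //; lia.
      -- lia.
    * apply: nfmono; apply: (I3 r); first by rewrite -(nfout (r:=r)) //; right.
      by rewrite -(hsout (r:=r)) //; right.
  + subst r; rewrite hsp in hrs.
    case: (ltnP s p) => c2; last (have -> : s = p by lia); last exact: nfp.
    by apply: nfmono; have [] := F1 (s := s); [lia|].
Qed.

Lemma ins_pref i j : Str n h T -> Pref n h T i j -> Pref n h T' i j.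
Proof.
case=> I1 I2 I3 HP s hs1.
case: (ltngtP s p) => [c1|c1|c1].
- by rewrite nfout ?hsout; try (left; lia); apply: HP.
- case: (leqP s q) => c2.
  + rewrite hsmid // ; split; first exact: nfmid.
    case: (leqP i s.-1) => c3.
      by have [] := HP s.-1; [lia|].
    by have := I1 s.-1; lia.
  + by rewrite nfout ?hsout; try (right; lia); apply: HP.
- subst s; rewrite hsp; split; first exact: nfp.
  have [np hp] := HP p hs1.
  by have := F3 np; lia.
Qed.

Lemma ins_S (P : pred nat) : S n h P T' <= S n h P T + P (h v).
Proof.
have hv := hv1.
rewrite /S (big_cat_nat _ (n := p)) //=; last lia.
rewrite [X in _ <= X + _](big_cat_nat _ (n := p)) //=; last lia.
rewrite (big_cat_nat _ (n := q.+1) (m := p)) //=; try lia.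
rewrite [X in _ <= _ + X + _](big_cat_nat _ (n := q.+1) (m := p)) //=; try lia.
have e1 : \sum_(1 <= r < p) (nf n T' r && P (hs n h T' r)) =
          \sum_(1 <= r < p) (nf n T r && P (hs n h T r)).
  by apply: eq_big_nat => r hr; rewrite nfout ?hsout //; left; lia.
have e3 : \sum_(q.+1 <= r < n.+1) (nf n T' r && P (hs n h T' r)) =
          \sum_(q.+1 <= r < n.+1) (nf n T r && P (hs n h T r)).
  by apply: eq_big_nat => r hr; rewrite nfout ?hsout //; right; lia.
have e2 : \sum_(p <= r < q.+1) (nf n T' r && P (hs n h T' r)) =
          P (h v) + \sum_(p <= r < q) (nf n T r && P (hs n h T r)).
  rewrite big_ltn; last lia.
  rewrite nfp hsp /=; congr (_ + _).
  rewrite big_add1 /=.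
  apply: eq_big_nat => r hr; have a1 : p < r.+1 by lia.
  have a2 : r.+1 <= q by lia.
  by rewrite (nfmid a1 a2) (hsmid a1 a2) (F4 hr).
have e4 : \sum_(p <= r < q) (nf n T r && P (hs n h T r)) <=
          \sum_(p <= r < q.+1) (nf n T r && P (hs n h T r)).
  by rewrite big_nat_recr /=; [apply: leq_addr | lia].
rewrite e1 e2 e3; lia.
all: lia.
Qed.

End Ins.

Section Step.
Variable K : eqType.
Variables (n : nat) (h : K -> nat).
Hypothesis hh : forall x, 1 <= h x <= n.

Lemma transfer (T T' : table K) :
  (forall r, nf n T' r = nf n T r /\ hs n h T' r = hs n h T r) ->
  [/\ Str n h T -> Str n h T',
      forall P, S n h P T' = S n h P T
    & forall i j, Pref n h T i j -> Pref n h T' i j].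
Proof.
move=> E; split.
- case=> I1 I2 I3; split.
  + by move=> r; have [_ ->] := E r.
  + by move=> r; have [-> ->] := E r; have [-> ->] := E r.+1; apply: I2.
  + move=> r s; have [-> ->] := E r; have [-> _] := E s; apply: I3.
- by move=> P; apply: eq_big_nat => r _; have [-> ->] := E r.
- by move=> i j HP s hs1; have [-> ->] := E s; apply: HP.
Qed.

Lemma step_inv (T T' : table K) o c d :
  step n h T o = Some (T', c, d) -> Str n h T ->
  [/\ Str n h T',
      forall P, S n h P T' <= S n h P T + count P [seq h u | u <- pmap (@ins_key K) [:: o]]
    & forall i j, Pref n h T i j -> Pref n h T' i j].
Proof.
case: o => u /=.
- case: ifP => // _.
  set p := ipos n h T u; set q := tpos n T p.
  case: ifP => // Hq [<- _ _] ST.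
  have Hp : h u <= p by apply: first_at_ge.
  have Hpq : p <= q by apply: first_at_ge.
  have F1 : forall s, h u <= s < p -> nf n T s /\ hs n h T s <= h u.
    move=> s /andP [s1 s2]; have := first_at_before s1 s2.
    rewrite /nf /hs; case: (get n T s) => //= [x|a]; rewrite -leqNgt; lia.
  have F3 : nf n T p -> h u < hs n h T p.
    have hp : p < n.+1 by lia.
    have := first_at_hit hp; rewrite /nf /hs -/p.
    by case: (get n T p).
  have F4 : forall s, p <= s < q -> nf n T s.
    move=> s /andP [s1 s2]; have := first_at_before s1 s2.
    by rewrite /nf; case: (get n T s).
  have F5 : ~~ nf n T q \/ is_tomb (get n T q).
    have hq : q < n.+1 by lia.
    have := first_at_hit hq; rewrite /nf -/q.
    by case: (get n T q) => //= *; [left|right].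
  split.
  + exact: (ins_str hh Hp Hpq Hq F1 F3 F4 F5).
  + move=> P /=; rewrite addn0; exact: (ins_S hh Hp Hpq Hq F3 F4).
  + move=> i j; exact: (ins_pref hh Hp Hpq Hq F3 F4).
- case: ifP => // hk [<- _ _] ST.
  set q := qpos n h T u in hk *.
  set T2 : table K := fun r => if r == q then @Tomb K (h u) else T r.
  have E : forall r, nf n T2 r = nf n T r /\ hs n h T2 r = hs n h T r.
    move=> r; rewrite /nf /hs /get /T2.
    case: eqP => [->|_] //.
    move: hk; rewrite /get; case: ifP => //.
    by case: (T q) => //= x _ /eqP ->.
  have [A1 A2 A3] := transfer E.
  split; [exact: A1| |exact: A3].
  by move=> P; rewrite A2 /= addn0.
- case=> <- _ _ ST; split => //.
  by move=> P /=; rewrite addn0.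
Qed.

End Step.

Section Exec.
Variable K : eqType.
Variables (n : nat) (h : K -> nat).
Hypothesis hh : forall x, 1 <= h x <= n.

Lemma exec_inv (T T' : table K) ops l :
  exec n h T ops = Some (T', l) -> Str n h T ->
  [/\ Str n h T',
      forall P, S n h P T' <= S n h P T + count P [seq h u | u <- pmap (@ins_key K) ops]
    & forall i j, Pref n h T i j -> Pref n h T' i j].
Proof.
elim: ops T T' l => [|o ops IH] T T' l /=.
  by case=> <- _ ST; split => // P; rewrite addn0.
case E: (step n h T o) => [[[T1 c] d]|] //.
case E2: (exec n h T1 ops) => [[Te l']|] // [<- _] ST.
have [S1 C1 P1] := step_inv hh E ST.
have [S2 C2 P2] := IH _ _ _ E2 S1.
split => //.
- move=> P; have := C1 P; have := C2 P; case: (o) => u /=; lia.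
- by move=> i j /P1 /P2.
Qed.

Lemma exec_split (T Tend : table K) pre o post res :
  exec n h T (pre ++ o :: post) = Some (Tend, res) ->
  exists T1 l1 T2 c d l2,
    [/\ exec n h T pre = Some (T1, l1), step n h T1 o = Some (T2, c, d),
        exec n h T2 post = Some (Tend, l2) & res = l1 ++ (c, d) :: l2].
Proof.
elim: pre T Tend res => [|o' pre IH] T Tend res /=.
  case E: (step n h T o) => [[[T1 c] d]|] //.
  case E2: (exec n h T1 post) => [[Te l']|] // [<- <-].
  by exists T, [::], T1, c, d, l'.
case E: (step n h T o') => [[[T1 c] d]|] //.
case E2: (exec n h T1 (pre ++ o :: post)) => [[Te l']|] // [<- <-].
have [T2 [l1 [T3 [c' [d' [l2 [X1 X2 X3 X4]]]]]]] := IH _ _ _ E2.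
exists T2, ((c, d) :: l1), T3, c', d', l2; split => //.
- by rewrite X1.
- by rewrite X4.
Qed.

Lemma init_str (T0 : table K) : rebuilt n h T0 -> Str n h T0.
Proof.
case=> R1 R2 R3; split.
- move=> r; rewrite /hs /get; case: ifP => // hr.
  have := R1 r hr; case E: (T0 r) => [|x|a] //= _.
  by have [] := R2 r x hr E.
- move=> r; rewrite /nf /hs => n1 n2.
  have r1 := nf_range n1; have r2 := nf_range n2.
  move: n1 n2; rewrite !get_in // => n1 n2; apply: R3 => //; lia.
- move=> r s; rewrite /nf /hs => n1 hrs.
  have r1 := nf_range n1; move: n1; rewrite get_in // => n1.
  have := R1 r r1; move: hrs n1; rewrite get_in //.
  case E: (T0 r) => [|x|a] //= hrs _ _.
  have [_ R] := R2 r x r1 E.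
  have := hh x => hx.
  rewrite get_in; last lia.
  by apply: R.
Qed.

Lemma init_S (T0 : table K) P : rebuilt n h T0 ->
  S n h P T0 <= count P [seq h x | x <- pmap (fun q => key_of (T0 q)) (iota 1 n)].
Proof.
case=> R1 _ _.
have : all (fun r => 1 <= r <= n) (iota 1 n).
  by apply/allP => r; rewrite mem_iota; lia.
rewrite /S /index_iota subn1 /=.
elim: (iota 1 n) => [|r s IH]; first by rewrite big_nil.
rewrite /= big_cons => /andP [hr hs'].
have := IH hs'; rewrite /nf /hs get_in //.
have := R1 r hr.
case: (T0 r) => [|x|a] //= _ H.
by rewrite leq_add2l.
Qed.

End Exec.

Section Core.
Variable K : eqType.
Variables (n : nat) (h : K -> nat).

Lemma core (T : table K) i e B : Str n h T -> 1 <= i -> i <= e ->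
  (forall s, i <= s < e -> nf n T s /\ hs n h T s <= B) ->
  exists j, [/\ i <= j <= e, Pref n h T i j &
     e - j <= S n h (fun x => (i <= x) && (x <= B)) T].
Proof.
move=> ST i1 ie H.
set j := first_at (fun s => i <= hs n h T s) i e.
have ij : i <= j by apply: first_at_ge.
have je : j <= e by apply: first_at_le.
exists j; split.
- by rewrite ij je.
- move=> s /andP [s1 s2]; have := first_at_before (P := fun s => i <= hs n h T s) s1 s2.
  have [] : nf n T s /\ hs n h T s <= B by apply: H; lia.
  by move=> a _ b; split => //; lia.
- case: (ltnP j e) => jlt; last by have -> : e - j = 0 by lia.
  have hj : i <= hs n h T j by apply: (first_at_hit (P := fun s => i <= hs n h T s)).
  have ne : nf n T e.-1 by have [] := H e.-1; [lia|].
  have := nf_range ne => er.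
  have L : e - j <= \sum_(j <= r < e) (nf n T r && (fun x => (i <= x) && (x <= B)) (hs n h T r)).
    have -> : e - j = \sum_(j <= r < e) 1 by rewrite sum_nat_const_nat muln1.
    rewrite big_nat_cond [X in _ <= X]big_nat_cond; apply: leq_sum => r /andP [hr _].
    have [nr hr2] : nf n T r /\ hs n h T r <= B by apply: H; lia.
    have hjr : hs n h T j <= hs n h T r.
      apply: chain => //; first (move=> t ht; have [] := H t; [lia|done]).
      lia.
    have hb : (i <= hs n h T r) && (hs n h T r <= B) by apply/andP; split; lia.
    by rewrite nr hb.
  apply: leq_trans L _.
  rewrite /S (big_cat_nat _ (n := j) (m := 1)) //=; try lia.
  rewrite (big_cat_nat _ (n := e) (m := j) (p := n.+1)) //=; try lia.
Qed.

Lemma spill_bound hs0 i D N :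
  N <= count (fun x => (i <= x) && (x <= i + D)) hs0 ->
  N <= 4 * spill hs0 i + 4 * D.+1.
Proof.
move=> HN.
case: (ltnP N (4 * D.+1)) => c1; first lia.
set k := N %/ 4.
have k1 : D.+1 <= k by rewrite /k; lia.
have k2 : 4 * k <= N by rewrite /k; lia.
have C : 4 * k <= count (fun a => i <= a < i + k) hs0.
  apply: leq_trans k2 (leq_trans HN _).
  by apply: sub_count => x /andP [a b]; apply/andP; split => //; lia.
have ks : k < (size hs0).+1.
  have := count_size (fun a => i <= a < i + k) hs0; lia.
have : k <= spill hs0 i.
  rewrite /spill.
  exact: (@leq_bigmax_cond _ (fun j : 'I_(size hs0).+1 => 4 * j <= count (fun a => i <= a < i + j) hs0) (fun j => nat_of_ord j) (Ordinal ks) C).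
rewrite /k; lia.
Qed.

Lemma offset_bound (T : table K) i j : Pref n h T i j -> i <= j ->
  j - i <= offset n h T i.
Proof.
move=> HP ij.
case: (ltnP i j) => c; last by have -> : j - i = 0 by lia.
have [nj _] := HP j.-1 ltac:(lia).
have := nf_range nj => jr.
have js : j < n.+2 by lia.
rewrite /offset.
apply: (@leq_bigmax_cond _ (fun j0 : 'I_n.+2 => (i <= j0) && all (fun q => ~~ is_free (get n T q) && (slot_hash h (get n T q) < i)) (index_iota i j0)) (fun j0 => j0 - i) (Ordinal js)).
rewrite /= ij /=; apply/allP => s; rewrite mem_index_iota => hs1.
by have [a b] := HP s hs1; apply/andP.
Qed.

End Core.

Definition okey (K : eqType) (o : op K) : K :=
  match o with Ins u | Del u | Qry u => u end.

Section Time.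
Variable K : eqType.
Variables (n : nat) (h : K -> nat).
Hypothesis hh : forall x, 1 <= h x <= n.

Lemma qpos_facts (T : table K) u :
  h u <= qpos n h T u /\
  forall s, h u <= s < qpos n h T u -> nf n T s /\ hs n h T s <= h u + 0.
Proof.
split; first exact: first_at_ge.
move=> s /andP [s1 s2]; have := first_at_before s1 s2.
rewrite /nf /hs; case: (get n T s) => //= [x|a]; lia.
Qed.

Lemma op_time (T T2 : table K) o c d : Str n h T -> step n h T o = Some (T2, c, d) ->
  (match o with Ins _ => True | _ => d = 0 end) /\
  exists j, [/\ h (okey o) <= j, Pref n h T (h (okey o)) j &
    c <= (j - h (okey o)) + S n h (fun x => (h (okey o) <= x) && (x <= h (okey o) + d)) T + 1].
Proof.
move=> ST; have hv := hh (okey o).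
case: o hv => u /= hv.
- case: ifP => // _.
  set p := ipos n h T u; set q := tpos n T p.
  case: ifP => // Hq [_ <- <-]; split => //.
  have Hp : h u <= p by apply: first_at_ge.
  have Hpq : p <= q by apply: first_at_ge.
  have F1 : forall s, h u <= s < p -> nf n T s.
    move=> s /andP [s1 s2]; have := first_at_before s1 s2.
    by rewrite /nf; case: (get n T s).
  have F4 : forall s, p <= s < q -> nf n T s.
    move=> s /andP [s1 s2]; have := first_at_before s1 s2.
    by rewrite /nf; case: (get n T s).
  have F5 : ~~ nf n T q \/ is_tomb (get n T q).
    have hq : q < n.+1 by lia.
    have := first_at_hit hq; rewrite /nf -/q.
    by case: (get n T q) => //= *; [left|right].
  set peak := match get n T q with Tomb a => a | _ => q end.
  have H : forall s, h u <= s < q -> nf n T s /\ hs n h T s <= h u + (peak - h u).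
    move=> s hs1.
    have ns : nf n T s by case: (ltnP s p) => c1; [apply: F1 | apply: F4]; lia.
    split => //.
    suff : hs n h T s <= peak by lia.
    case: F5 => [nq|tq].
    + have e : get n T q = Free K by move: nq; rewrite /nf; case: (get n T q).
      rewrite /peak e; case: ST => I1 _ _; have := I1 s; lia.
    + have nq : nf n T q by move: tq; rewrite /nf; case: (get n T q).
      have : hs n h T s <= hs n h T q.
        apply: chain => //; last lia.
        move=> t ht; case: (ltnP t q) => c1; last (have -> : t = q by lia); last done.
        case: (ltnP t p) => c2; [apply: F1 | apply: F4]; lia.
      rewrite /hs /peak; move: tq; case: (get n T q) => //.
  have [j [ij Pj Cj]] := core ST (proj1 (andP hv)) (leq_trans Hp Hpq) H.
  exists j; split => //; lia.
- case: ifP => // hk [_ <- <-]; split => //.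
  have [A1 A2] := qpos_facts T u.
  have [j [ij Pj Cj]] := core ST (proj1 (andP hv)) A1 A2.
  exists j; split => //; lia.
- case=> _ <- <-; split => //.
  have [A1 A2] := qpos_facts T u.
  have [j [ij Pj Cj]] := core ST (proj1 (andP hv)) A1 A2.
  exists j; split => //; lia.
Qed.

End Time.

Lemma exec_size (K : eqType) n (h : K -> nat) T T' ops l :
  exec n h T ops = Some (T', l) -> size l = size ops.
Proof.
elim: ops T T' l => [|o ops IH] T T' l /=; first by case=> _ <-.
case: (step n h T o) => [[[T1 c] d]|] //.
case E2: (exec n h T1 ops) => [[Te l']|] // [_ <-] /=.
by rewrite (IH _ _ _ E2).
Qed.

Theorem mainTheorem13 :
  exists C : nat,
  forall (K : eqType) (n : nat) (h : K -> nat) (T0 Tend : table K)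
         (ops : seq (op K)) (res : seq (nat * nat)),
  (forall x, 1 <= h x <= n) ->
  rebuilt n h T0 ->
  exec n h T0 ops = Some (Tend, res) ->
  forall (pre post : seq (op K)) (o : op K),
  ops = pre ++ o :: post ->
  let: (c, d) := nth (0, 0) res (size pre) in
  match o with
  | Ins u => c <= C * (offset n h Tend (h u)
                       + spill (window_hashes n h T0 ops) (h u) + d + 1)
  | Del u | Qry u => c <= C * (offset n h Tend (h u)
                       + spill (window_hashes n h T0 ops) (h u) + 1)
  end.
Proof.
exists 5 => K n h T0 Tend ops res hh RB EX pre post o Eops.
have EX' := EX; rewrite Eops in EX'.
have [T1 [l1 [T2 [c [d [l2 [X1 X2 X3 X4]]]]]]] := exec_split EX'.
have sz := exec_size X1.
rewrite X4 nth_cat sz ltnn subnn /=.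
have ST0 := init_str hh RB.
have [ST1 C1 P1] := exec_inv hh X1 ST0.
have [ST2 _ P2] := step_inv hh X2 ST1.
have [_ _ P3] := exec_inv hh X3 ST2.
have [Hd [j [ij Pj Cj]]] := op_time hh ST1 X2.
have OB := offset_bound (P3 _ _ (P2 _ _ Pj)) ij.
have CB : S n h (fun x => (h (okey o) <= x) && (x <= h (okey o) + d)) T1
          <= count (fun x => (h (okey o) <= x) && (x <= h (okey o) + d)) (window_hashes n h T0 ops).
  apply: leq_trans (C1 _) _.
  rewrite /window_hashes count_cat Eops pmap_cat map_cat count_cat.
  have := init_S (fun x => (h (okey o) <= x) && (x <= h (okey o) + d)) RB; lia.
have SB := spill_bound CB.
move: Hd OB SB Cj; case: (o) => u /=; try move=> ->; lia.
Qed.
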